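(* Let $F_k$ denote the free $k$-algebra on two generators of degree one. (1) If $k$ has characteristic not $2$ and $\sqrt{-1}\in k$, then $F_k$ is a quotient of $A_k$ by a graded ideal. (2) $F_{\mathbb R}$ is not a quotient of $A_{\mathbb R}$ by a graded ideal.
   Context: For a field $k$, $A_k=k\langle x_1,\dots,x_7\rangle/(r_1,\dots,r_7)$, graded by $\deg x_i=1$, with $r_1=[x_2,x_3]+[x_4,x_5]+[x_6,x_7]$, $r_2=[x_3,x_1]+[x_4,x_6]+[x_7,x_5]$, $r_3=[x_1,x_2]+[x_6,x_5]+[x_7,x_4]$, $r_4=[x_5,x_1]+[x_3,x_7]+[x_6,x_2]$, $r_5=[x_1,x_4]+[x_2,x_7]+[x_3,x_6]$, $r_6=[x_7,x_1]+[x_5,x_3]+[x_2,x_4]$, $r_7=[x_1,x_6]+[x_4,x_3]+[x_5,x_2]$. *)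

(* Defs.v *)
From HB Require Import structures.
From mathcomp Require Import all_boot all_order all_algebra.
From mathcomp Require Import monalg.
From mathcomp Require Import Rstruct.

Set Implicit Arguments.
Unset Strict Implicit.
Unset Printing Implicit Defensive.
Import GRing.Theory.
Local Open Scope ring_scope.

(* The free (noncommutative) k-algebra k<y_0,...,y_{n-1}>: the monoid algebra
   of the free monoid {fmonom 'I_n} (words in 'I_n). A word of length d has
   degree d, i.e. every generator has degree one. *)
Definition FreeAlg (k : fieldType) (n : nat) := {malg k[{fmonom 'I_n}]}.

Definition gen (k : fieldType) (n : nat) (i : 'I_n) : FreeAlg k n :=
  << fmu i >>.

(* p is homogeneous of degree d: all monomials occurring in p are words of
   length d (the zero polynomial is homogeneous of every degree). *)
Definition homogeneous (k : fieldType) (n : nat) (d : nat) (p : FreeAlg k n) :=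
  forall m : {fmonom 'I_n}, p@_m != 0 -> size (fmonom_val m) = d.

Definition commutator (k : fieldType) (n : nat) (a b : FreeAlg k n) :=
  a * b - b * a.

(* x_1, ..., x_7 of the paper are x 0, ..., x 6 here. *)
Definition x (k : fieldType) (i : nat) : FreeAlg k 7 := gen k (inord i.-1).

Notation "[ a , b ]_ k" := (commutator (x k a) (x k b))
  (at level 0, a at level 99, b at level 99, k at level 0).

(* The seven defining relations r_1, ..., r_7 of A_k (r j = r_{j+1}). *)
Definition rel (k : fieldType) (j : 'I_7) : FreeAlg k 7 :=
  match val j with
  | 0 => [2,3]_k + [4,5]_k + [6,7]_k
  | 1 => [3,1]_k + [4,6]_k + [7,5]_k
  | 2 => [1,2]_k + [6,5]_k + [7,4]_k
  | 3 => [5,1]_k + [3,7]_k + [6,2]_k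
  | 4 => [1,4]_k + [2,7]_k + [3,6]_k
  | 5 => [7,1]_k + [5,3]_k + [2,4]_k
  | _ => [1,6]_k + [4,3]_k + [5,2]_k
  end.

(* A_k = k<x_1..x_7>/(r_1..r_7). By the universal property of this quotient,
   graded k-algebra homomorphisms A_k -> B are exactly graded k-algebra
   homomorphisms k<x_1..x_7> -> B vanishing on r_1,...,r_7.
   "F_k is a quotient of A_k by a graded ideal" means there is a surjective
   graded k-algebra homomorphism A_k -> F_k (its kernel is the graded ideal),
   where F_k = k<y_1,y_2> is the free algebra on two generators of degree 1. *)
Definition F_graded_quotient_of_A (k : fieldType) : Prop :=
  exists phi : {lrmorphism FreeAlg k 7 -> FreeAlg k 2},
    [/\ forall j : 'I_7, phi (rel k j) = 0,
        forall (d : nat) (p : FreeAlg k 7),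
          homogeneous d p -> homogeneous d (phi p)
      & forall q : FreeAlg k 2, exists p : FreeAlg k 7, phi p = q].

(* Main.v *)
Require Import Defs.
From HB Require Import structures.
From mathcomp Require Import all_boot all_order all_algebra.
From mathcomp Require Import monalg.
From mathcomp Require Import Rstruct.
From mathcomp Require Import finmap.
From mathcomp Require Import ring.
Local Open Scope ring_scope.
Set Implicit Arguments. Unset Strict Implicit. Unset Printing Implicit Defensive.
Import GRing.Theory Num.Theory.

Section Basics.
Variables (k : fieldType) (n : nat).
Implicit Types (g h : FreeAlg k n).

Lemma malgC_comm (c : k) g : g * c%:MP = c%:MP * g.
Proof.
rewrite mul_malgC malgZ_def malgM_def fgmulgU /fgscale.
by apply: eq_bigr => m _; rewrite mulm1 mulrC.
Qed.

Lemma scalerAr_malg (c : k) g h : g * (c *: h) = c *: (g * h).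
Proof. by rewrite -!mul_malgC mulrA malgC_comm mulrA. Qed.

Lemma monalgUZ (c : k) (m : {fmonom 'I_n}) : << c *g m >> = c *: (<< m >> : FreeAlg k n).
Proof. by apply/malgP => m'; rewrite mcoeffZ !mcoeffU mulr_natr. Qed.

Lemma hom0 d : homogeneous d (0 : FreeAlg k n).
Proof. by move=> m; rewrite mcoeff0 eqxx. Qed.

Lemma homD d g h : homogeneous d g -> homogeneous d h -> homogeneous d (g + h).
Proof.
move=> hg hh m; rewrite mcoeffD.
have [/eqP g0|/hg //] := boolP (g@_m == 0).
by rewrite g0 add0r => /hh.
Qed.

Lemma homZ d (c : k) g : homogeneous d g -> homogeneous d (c *: g).
Proof. by move=> hg m; rewrite mcoeffZ mulf_eq0 negb_or => /andP[_ /hg]. Qed.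

Lemma homM d1 d2 g h : homogeneous d1 g -> homogeneous d2 h ->
  homogeneous (d1 + d2) (g * h).
Proof.
move=> hg hh m; rewrite mcoeff_neq0 => /msuppM_le [m1 [m2 [h1 h2 ->]]].
rewrite fmM size_cat (hg m1) ?(hh m2) // mcoeff_neq0 //.
Qed.

Lemma homU (m : {fmonom 'I_n}) : homogeneous (size (fmonom_val m)) (<< m >> : FreeAlg k n).
Proof. move=> m'; rewrite mcoeffU; have [->//|] := eqVneq m m'; by rewrite mulr0n eqxx. Qed.

Lemma hom1 : homogeneous 0 (1 : FreeAlg k n).
Proof. move=> m; rewrite mcoeff1; have [->|] := eqVneq m mone; by rewrite ?fm1 ?eqxx. Qed.

Lemma gen_hom (i : 'I_n) : homogeneous 1 (gen k i).
Proof. by have := homU (m := fmu i); rewrite fmU. Qed.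

Lemma hom_prod (I : Type) (s : seq I) (F : I -> FreeAlg k n) :
  (forall i, homogeneous 1 (F i)) -> homogeneous (size s) (\prod_(i <- s) F i).
Proof.
move=> hF; elim: s => [|a s IH]; first by rewrite big_nil; apply: hom1.
by rewrite big_cons; apply: (homM (hF a) IH).
Qed.

Lemma hom_sum (I : Type) (s : seq I) (P : pred I) (F : I -> FreeAlg k n) d :
  (forall i, P i -> homogeneous d (F i)) -> homogeneous d (\sum_(i <- s | P i) F i).
Proof.
move=> hF; elim: s => [|a s IH]; first by rewrite big_nil; apply: hom0.
rewrite big_cons; case: ifP => // Pa; exact: homD (hF a Pa) IH.
Qed.

Lemma word_prod (m : {fmonom 'I_n}) :
  (<< m >> : FreeAlg k n) = \prod_(i <- fmonom_val m) gen k i.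
Proof.
case: m => s; elim: s => [|a s IH] /=.
  by rewrite big_nil; congr (<< _ >>); apply: val_inj; rewrite /= fm1.
rewrite big_cons -IH /gen malgM_def fgmulUU mulr1; congr (<< _ >>).
by apply: val_inj; rewrite /= fmM fmU.
Qed.

End Basics.

Lemma zmod_aux (V : zmodType) (x1 x2 x3 x4 y2 y3 : V) :
  x1 + x2 + (x3 + x4) - (x1 + y2 + (y3 + x4)) = x2 - y2 - (y3 - x3).
Proof.
rewrite !opprD addrACA [x1 + x2 + _]addrACA [x3 + x4 + _]addrACA !subrr add0r addr0.
by rewrite opprK [- y3 + x3]addrC.
Qed.
Lemma comm_lin_gen (R : comNzRingType) (A : lalgType R)
  (hAr : forall (c : R) (x y : A), x * (c *: y) = c *: (x * y)) (a b c d : R) (U V : A) :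
  (a *: U + b *: V) * (c *: U + d *: V) - (c *: U + d *: V) * (a *: U + b *: V)
  = (a * d - b * c) *: (U * V - V * U).
Proof.
rewrite !mulrDl !mulrDr !hAr -!scalerAl !scalerA (mulrC c a) (mulrC c b) (mulrC d a) (mulrC d b).
by rewrite zmod_aux scalerBr !scalerBl.
Qed.


Section Gen.
Variables (K : comNzRingType).
Definition Mn (A B : nat -> K) p q := A p * B q - B p * A q.
Definition cr (A B : nat -> K) (j : nat) : K :=
  match j with
  | 0 => Mn A B 1 2 + Mn A B 3 4 + Mn A B 5 6
  | 1 => Mn A B 2 0 + Mn A B 3 5 + Mn A B 6 4
  | 2 => Mn A B 0 1 + Mn A B 5 4 + Mn A B 6 3
  | 3 => Mn A B 4 0 + Mn A B 2 6 + Mn A B 5 1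
  | 4 => Mn A B 0 3 + Mn A B 1 6 + Mn A B 2 5
  | 5 => Mn A B 6 0 + Mn A B 4 2 + Mn A B 1 3
  | _ => Mn A B 0 5 + Mn A B 3 2 + Mn A B 4 1
  end.
Definition cm (R : ringType) (a b : R) := a * b - b * a.
Definition relg (R : ringType) (g : nat -> R) (j : nat) : R :=
  match j with
  | 0 => cm (g 1) (g 2) + cm (g 3) (g 4) + cm (g 5) (g 6)
  | 1 => cm (g 2) (g 0) + cm (g 3) (g 5) + cm (g 6) (g 4)
  | 2 => cm (g 0) (g 1) + cm (g 5) (g 4) + cm (g 6) (g 3)
  | 3 => cm (g 4) (g 0) + cm (g 2) (g 6) + cm (g 5) (g 1)
  | 4 => cm (g 0) (g 3) + cm (g 1) (g 6) + cm (g 2) (g 5)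
  | 5 => cm (g 6) (g 0) + cm (g 4) (g 2) + cm (g 1) (g 3)
  | _ => cm (g 0) (g 5) + cm (g 3) (g 2) + cm (g 4) (g 1)
  end.

Lemma relE_gen (R1 : ringType) (R2 : lalgType K)
  (hAr : forall (c : K) (x y : R2), x * (c *: y) = c *: (x * y))
  (phi : {rmorphism R1 -> R2}) (g : nat -> R1) (A B : nat -> K) (U V : R2) :
  (forall n, (n < 7)%N -> phi (g n) = A n *: U + B n *: V) ->
  forall j, phi (relg g j) = cr A B j *: (U * V - V * U).
Proof.
move=> hA [|[|[|[|[|[|j]]]]]];
rewrite /relg /cm /= !rmorphD !rmorphN !rmorphM !hA // !(comm_lin_gen hAr) -!scalerDl //.
Qed.
End Gen.

Lemma lagrange_id (K : comNzRingType) (A B : nat -> K) :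
  \sum_(p < 7) \sum_(q < 7) (Mn A B p q) ^+ 2 = (\sum_(j < 7) (cr A B j) ^+ 2) *+ 2.
Proof.
rewrite !big_ord_recr !big_ord0 /=.
rewrite /cr /Mn. ring.
Qed.
Lemma lagrange (K : realDomainType) (A B : nat -> K) :
  (forall j, (j < 7)%N -> cr A B j = 0) -> forall p q, (p < 7)%N -> (q < 7)%N -> Mn A B p q = 0.
Proof.
move=> h p q hp hq.
have h0 : \sum_(p < 7) \sum_(q < 7) (Mn A B p q) ^+ 2 = 0.
  rewrite lagrange_id big1 ?mul0rn // => j _; by rewrite h // expr2 mul0r.
have h1 := (@psumr_eq0P _ _ _ _ (fun i _ => sumr_ge0 _ (fun j _ => sqr_ge0 _)) h0 (Ordinal hp) isT).
have /eqP := (@psumr_eq0P _ _ _ _ (fun j _ => sqr_ge0 _) h1 (Ordinal hq) isT).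
by rewrite sqrf_eq0 => /eqP.
Qed.

Section Two.
Variable (k : fieldType).
Definition Y0 : FreeAlg k 2 := gen k ord0.
Definition Y1 : FreeAlg k 2 := gen k ord_max.
Definition CC : FreeAlg k 2 := Y0 * Y1 - Y1 * Y0.

Lemma comm_lin n (a b c d : k) (U V : FreeAlg k n) :
  (a *: U + b *: V) * (c *: U + d *: V) - (c *: U + d *: V) * (a *: U + b *: V)
  = (a * d - b * c) *: (U * V - V * U).
Proof. exact: comm_lin_gen (@scalerAr_malg k n) a b c d U V. Qed.

Lemma fmu01 : (fmu (ord0 : 'I_2) == fmu ord_max) = false.
Proof. by rewrite fmP !fmU. Qed.

Lemma D1 (q : FreeAlg k 2) : homogeneous 1 q ->
  q = q@_(fmu ord0) *: Y0 + q@_(fmu ord_max) *: Y1.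
Proof.
move=> hq; apply/malgP => m; rewrite mcoeffD !mcoeffZ /Y0 /Y1 /gen !mcoeffU.
have [<-|n0] := eqVneq (fmu ord0) m.
  by rewrite eq_sym fmu01 mulr0n mulr1n mulr1 mulr0 addr0.
have [<-|n1] := eqVneq (fmu ord_max) m.
  by rewrite mulr0n mulr1n mulr1 mulr0 add0r.
rewrite !mulr0n !mulr0 addr0; apply/eqP; apply: contraT => /hq.
case: m n0 n1 => [[|i [|? ?]]] //= n0 n1 _.
case: i n0 n1 => [[|[|?]] Hi] n0 n1.
- by case/eqP: n0; apply: val_inj; rewrite /= fmU; congr [:: _]; apply: val_inj.
- by case/eqP: n1; apply: val_inj; rewrite /= fmU; congr [:: _]; apply: val_inj.
- by [].
Qed.

Lemma CC_neq0 : CC != 0.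
Proof.
apply/eqP => /malgP /(_ (mmul (fmu ord0) (fmu ord_max))).
rewrite mcoeff0 /CC /Y0 /Y1 /gen !malgM_def !fgmulUU mcoeffB !mcoeffU mulr1 eqxx.
have -> : (mmul (fmu ord_max) (fmu ord0) == mmul (fmu (ord0 : 'I_2)) (fmu ord_max)) = false.
  by rewrite fmP !fmM !fmU.
by rewrite mulr0n subr0 mulr1n => /eqP; rewrite oner_eq0.
Qed.


Lemma relE (phi : {rmorphism FreeAlg k 7 -> FreeAlg k 2}) (A B : nat -> k) :
  (forall n, (n < 7)%N -> phi (gen k (inord n)) = A n *: Y0 + B n *: Y1) ->
  forall j : 'I_7, phi (Defs.rel k j) = cr A B (val j) *: CC.
Proof.
move=> hA j.
have -> : Defs.rel k j = relg (fun n => gen k (inord n)) (val j).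
  by case: j => [[|[|[|[|[|[|j]]]]]] Hj].
rewrite /CC; exact: (@relE_gen k (FreeAlg k 7) (FreeAlg k 2) (@scalerAr_malg k 2) phi _ A B Y0 Y1 hA).
Qed.

End Two.

Section P1.
Variables (k : fieldType) (i : k).
Hypothesis hi : i ^+ 2 = -1.

Definition Anat (n : nat) : k := match n with 2 => 1 | 3 => i | _ => 0 end.
Definition Bnat (n : nat) : k := match n with 1 => 1 | 4 => - i | _ => 0 end.
Definition Lg (j : 'I_7) : FreeAlg k 2 := Anat j *: Y0 k + Bnat j *: Y1 k.
Definition hw (m : {fmonom 'I_7}) : FreeAlg k 2 := \prod_(j <- fmonom_val m) Lg j.

Lemma hw_mm : mmorphism hw.
Proof.
split; first by move=> x y; rewrite /hw fmM big_cat.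
by rewrite /hw fm1 big_nil.
Qed.

HB.instance Definition _ := monalg.isMultiplicative.Build _ _ hw hw_mm.

Definition phi0 (p : FreeAlg k 7) : FreeAlg k 2 := mmap (@malgC {fmonom 'I_2} k) hw p.

Lemma phi0_add : additive phi0.
Proof. exact: mmap_is_additive. Qed.

Lemma phi0_mul : multiplicative phi0.
Proof.
apply: commr_mmap_is_multiplicative => g m m'.
by rewrite /GRing.comm malgC_comm.
Qed.

Lemma phi0_scal : scalable phi0.
Proof. by move=> c g; rewrite /phi0 mmapZ mul_malgC. Qed.

HB.instance Definition _ := GRing.isAdditive.Build (FreeAlg k 7) (FreeAlg k 2) phi0 phi0_add.
HB.instance Definition _ := GRing.isMultiplicative.Build (FreeAlg k 7) (FreeAlg k 2) phi0 phi0_mul.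
HB.instance Definition _ := GRing.isScalable.Build k (FreeAlg k 7) (FreeAlg k 2) *:%R phi0 phi0_scal.

Definition phiL : {lrmorphism FreeAlg k 7 -> FreeAlg k 2} := phi0.


Lemma phi0_gen (j : 'I_7) : phi0 (gen k j) = Lg j.
Proof.
rewrite /phi0 /gen mmapU.
change ((1 : k)%:MP * hw (fmu j) = Lg j).
rewrite mpolyC1E mul1r /hw fmU big_cons big_nil mulr1 //.
Qed.

Lemma phi0_rel (j : 'I_7) : phiL (Defs.rel k j) = 0.
Proof.
rewrite (@relE k phiL Anat Bnat); last first.
  by move=> n hn; rewrite /= phi0_gen /Lg inordK.
suff -> : cr Anat Bnat j = 0 by rewrite scale0r.
case: j => [[|[|[|[|[|[|j]]]]]] Hj] /=; rewrite /cr /Mn /Anat /Bnat /=; try ring.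
transitivity (- (i ^+ 2 + 1)); first ring.
by rewrite hi addNr oppr0.
Qed.


Lemma Lg_hom j : homogeneous 1 (Lg j).
Proof. by apply: homD; apply: homZ; apply: gen_hom. Qed.

Lemma phi0_hom d p : homogeneous d p -> homogeneous d (phi0 p).
Proof.
move=> hp; rewrite /phi0 mmapE big_seq; apply: hom_sum => m hm.
change (homogeneous d ((p@_m)%:MP * hw m)); rewrite mul_malgC; apply: homZ.
rewrite -(hp m); last by rewrite mcoeff_neq0.
rewrite /hw; apply: hom_prod => j; exact: Lg_hom.
Qed.

Definition pre (j : 'I_2) : FreeAlg k 7 :=
  if j == ord0 then gen k (inord 2) else gen k (inord 1).

Lemma phi0_pre j : phi0 (pre j) = gen k j.
Proof.
rewrite /pre; case: j => [[|[|?]] Hj] //=.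
  rewrite phi0_gen /Lg inordK // /Anat /Bnat scale1r scale0r addr0 /Y0.
  by congr gen; apply: val_inj.
rewrite phi0_gen /Lg inordK // /Anat /Bnat scale1r scale0r add0r /Y1.
by congr gen; apply: val_inj.
Qed.

Lemma phi0_surj q : exists p, phiL p = q.
Proof.
exists (\sum_(m <- msupp q) q@_m *: \prod_(j <- fmonom_val m) pre j).
rewrite [RHS]monalgE raddf_sum; apply: eq_bigr => m _.
transitivity (q@_m *: phiL (\prod_(j <- fmonom_val m) pre j)); first exact: linearZZ.
rewrite monalgUZ word_prod; congr (_ *: _).
transitivity (\prod_(j <- fmonom_val m) phiL (pre j)); first exact: rmorph_prod.
by apply: eq_bigr => j _; apply: phi0_pre.
Qed.

End P1.

Lemma part1 (k : fieldType) : (exists i : k, i ^+ 2 = -1) -> F_graded_quotient_of_A k.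
Proof.
case=> i hi; exists (phiL i); split.
- exact: phi0_rel.
- exact: phi0_hom.
- exact: phi0_surj.
Qed.

Lemma part2 : ~ F_graded_quotient_of_A Rdefinitions.R.
Proof.
case=> phi [hrel hhom hsurj].
pose A n := (phi (gen Rdefinitions.R (inord n)))@_(fmu ord0).
pose B n := (phi (gen Rdefinitions.R (inord n)))@_(fmu ord_max).
have hA : forall n, (n < 7)%N -> phi (gen _ (inord n)) = A n *: Y0 _ + B n *: Y1 _.
  by move=> n _; apply: D1; apply: hhom; apply: gen_hom.
have hcr : forall j, (j < 7)%N -> cr A B j = 0.
  move=> j hj; have h1 := relE hA (inord j).
  have : cr A B (@inord 6 j) *: CC _ = 0 by rewrite -h1; exact: hrel.
  rewrite inordK // => /eqP.
  by rewrite scaler_eq0 (negbTE (CC_neq0 _)) orbF => /eqP.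
have hM := @lagrange _ A B hcr.
have [u [v [huv hl]]] : exists u v : Rdefinitions.R,
    ((u != 0) || (v != 0)) /\ forall j, (j < 7)%N -> u * A j + v * B j = 0.
  case: (boolP [exists j : 'I_7, A j != 0]) => [/existsP [j0 hj0]|].
    exists (B j0), (- A j0); split; first by rewrite oppr_eq0 hj0 orbT.
    move=> j hj; have /eqP := hM j0 j (ltn_ord j0) hj.
    by rewrite /Mn subr_eq0 => /eqP e; rewrite mulNr e mulrC subrr.
  rewrite negb_exists => /forallP hA0; exists 1, 0; split; first by rewrite oner_eq0.
  move=> j hj; have := hA0 (Ordinal hj); rewrite negbK /= => /eqP ->.
  by rewrite mulr0 mul0r addr0.
pose lam (g : FreeAlg Rdefinitions.R 2) := u * g@_(fmu ord0) + v * g@_(fmu ord_max).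
have lamZ c g : lam (c *: g) = c * lam g.
  by rewrite /lam !mcoeffZ mulrDr !mulrA (mulrC u) (mulrC v).
have key : forall c (m : {fmonom 'I_7}), lam (phi << c *g m >>) = 0.
  move=> c m.
  have -> : phi << c *g m >> = c *: phi << m >>.
    rewrite monalgUZ; exact: linearZZ.
  rewrite lamZ.
  suff -> : lam (phi << m >>) = 0 by rewrite mulr0.
  have [hs|hs] := eqVneq (size (fmonom_val m)) 1%N.
    case: m hs => [[|j [|? ?]]] // _.
    have -> : << FMonom [:: j] >> = gen Rdefinitions.R j.
      by rewrite /gen; congr (<< _ >>); apply: val_inj; rewrite /= fmU.
    rewrite -[j]inord_val hA ?inord_val ?ltn_ord //.
    rewrite /lam !mcoeffD !mcoeffZ /Y0 /Y1 /gen !mcoeffU !eqxx fmu01 eq_sym fmu01.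
    by rewrite !mulr0n !mulr1n !mulr1 !mulr0 addr0 add0r (hl _ (ltn_ord j)).
  have hh := hhom _ _ (homU (m := m)).
  have z0 : (phi << m >>)@_(fmu ord0) = 0.
    by apply/eqP; apply: contraT => /hh; rewrite fmU => /esym /eqP; rewrite (negbTE hs).
  have z1 : (phi << m >>)@_(fmu ord_max) = 0.
    by apply/eqP; apply: contraT => /hh; rewrite fmU => /esym /eqP; rewrite (negbTE hs).
  by rewrite /lam z0 z1 !mulr0 addr0.
have lam0 : forall p, lam (phi p) = 0.
  move=> p; rewrite (monalgE p) raddf_sum.
  apply: (big_ind (fun g => lam g = 0)).
  - by rewrite /lam !mcoeff0 !mulr0 addr0.
  - by move=> x y hx hy; rewrite /lam !mcoeffD !mulrDr addrACA -/(lam x) -/(lam y) hx hy addr0.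
  by move=> m _; apply: key.
have lY0 : lam (Y0 _) = u.
  by rewrite /lam /Y0 /gen !mcoeffU eqxx fmu01 mulr0n mulr1n mulr1 mulr0 addr0.
have lY1 : lam (Y1 _) = v.
  by rewrite /lam /Y1 /gen !mcoeffU eqxx eq_sym fmu01 mulr0n mulr1n mulr1 mulr0 add0r.
have [p0 hp0] := hsurj (Y0 _).
have [p1 hp1] := hsurj (Y1 _).
move: huv; rewrite -lY0 -lY1 -hp0 -hp1 !lam0 eqxx.
by [].
Qed.

Theorem proposition6p2 :
  (forall k : fieldType,
      (2%:R : k) != 0 ->
      (exists i : k, i ^+ 2 = -1) ->
      F_graded_quotient_of_A k)
  /\ ~ F_graded_quotient_of_A Rdefinitions.R.
Proof.
split; last exact: part2.
by move=> k _; apply: part1.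
Qed.
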